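(* Let $(W,S)$ be a Coxeter group, $\Gamma$ a totally ordered abelian group and $L:W\to\Gamma$ a weight function with $L(s)\ge 0$ for all $s\in S$, and let $P^\ast_{y,w}$, $\mu^s_{y,w}$ be as in the context. Let $\varepsilon:\Gamma\to\{\pm1\}$ be any group homomorphism, write $(-1)^\gamma:=\varepsilon(\gamma)$, and let $\theta$ be the ring automorphism of $\mathbb{Z}[\Gamma]$ with $\theta(v^\gamma)=(-1)^\gamma v^\gamma$. Then for all $y,w\in W$ and $s\in S$: (a) $\theta(P^\ast_{y,w})=(-1)^{L(w)+L(y)}P^\ast_{y,w}$; (b) $\theta(\mu^s_{y,w})=(-1)^{L(w)+L(y)+L(s)}\mu^s_{y,w}$. Consequently: (c) $P_{y,w}:=v^{L(w)-L(y)}P^\ast_{y,w}\in\mathbb{Z}[2\Gamma]$; (d) $v^{L(w)-L(y)}\,v_s\,\mu^s_{y,w}\in\mathbb{Z}[2\Gamma]$, where $\mathbb{Z}[2\Gamma]$ denotes the subring of $\mathbb{Z}[\Gamma]$ spanned by the $v^\gamma$ with $\gamma\in 2\Gamma$.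
   Context: $(W,S)$ is a Coxeter group with length function $l$ and Bruhat order $\le$. $\Gamma$ is a totally ordered abelian group; $\mathbb{Z}[\Gamma]$ is its group ring, with the basis element of $\gamma$ written $v^\gamma$ (so $v^{\gamma+\gamma'}=v^\gamma v^{\gamma'}$); $\Gamma_{>0}$, $\Gamma_{<0}$ denote the positive/negative elements and $\mathbb{Z}[\Gamma_{>0}]$ etc. the spans of the corresponding $v^\gamma$. A weight function is a map $L:S\to\Gamma$ with $L(s)=L(t)$ whenever $s,t$ are conjugate in $W$, extended to $W$ by $L(s_1\cdots s_n)=\sum L(s_i)$ for reduced expressions. Put $v_s:=v^{L(s)}$. The Hecke algebra $H=H(W,S,L)$ is the $\mathbb{Z}[\Gamma]$-algebra with basis $(T_w)_{w\in W}$, where $T_sT_w=T_{sw}$ if $l(sw)>l(w)$ and $T_s^2=1+(v_s-v_s^{-1})T_s$. Let $\overline{\phantom{x}}$ be the ring involution of $\mathbb{Z}[\Gamma]$ with $\overline{v^\gamma}=v^{-\gamma}$, extended to the ring automorphism $\sum a_wT_w\mapsto\sum\overline{a_w}\,T_{w^{-1}}^{-1}$ of $H$. The Kazhdan–Lusztig basis $(C_w)_{w\in W}$ is the unique $\mathbb{Z}[\Gamma]$-basis with $\overline{C_w}=C_w$ and $C_w\in T_w+\sum_{y}\mathbb{Z}[\Gamma_{>0}]T_y$. Define $P^\ast_{y,w}\in\mathbb{Z}[\Gamma]$ by $C_w=\sum_{y\in W}(-1)^{l(y)+l(w)}\overline{P^\ast_{y,w}}\,T_y$, and for $s\in S$ with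 $sw>w$ define $\mu^s_{y,w}\in\mathbb{Z}[\Gamma]$ by $C_sC_w=C_{sw}+\sum_{y<w}(-1)^{l(y)+l(w)+1}\mu^s_{y,w}C_y$; set $\mu^s_{y,w}:=0$ in all other cases (in particular $\mu^s_{y,w}\neq0$ only if $L(s)>0$ and $sy<y<w<sw$). *)

(* Defs.v *)
(* Since (W,S) may be infinite and Gamma is an arbitrary
   totally ordered abelian group, all objects are given "by their defining
   properties": each predicate below pins the object down uniquely (up to
   the evident isomorphism), exactly as in the paper's definitions. *)
From HB Require Import structures.
From mathcomp Require Import all_boot all_order all_algebra.

Set Implicit Arguments.
Unset Strict Implicit.
Unset Printing Implicit Defensive.

Import Order.TTheory GRing.Theory Num.Theory.
Local Open Scope ring_scope.

Definition wprod (W : groupType) (s : seq W) : W := (\prod_(x <- s) x)%g.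

(* (W,S) is a Coxeter system: S consists of involutions (<> 1) generating W,
   and W has the presentation < S | (st)^{m(s,t)} = 1 >, with m(s,t) the
   order of st in W (m(s,t) = infinity meaning no relation).  The
   presentation is expressed by its universal property: every map f from S
   to a group G that satisfies all these relations extends to a group
   homomorphism W -> G.  (Note (st)^n = 1 in W iff m(s,t) divides n.) *)
Definition coxeter_system (W : groupType) (S : pred W) : Prop :=
  [/\ (forall s, S s -> s <> 1%g /\ (s * s)%g = 1%g),
      (forall w, exists s : seq W, all S s /\ wprod s = w) &
      (forall (G : groupType) (f : W -> G),
         (forall s t n, S s -> S t -> ((s * t) ^+ n)%g = 1%g ->
                        ((f s * f t) ^+ n)%g = 1%g) ->
         exists phi : W -> G,
           (forall x y, phi (x * y)%g = (phi x * phi y)%g) /\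
           (forall s, S s -> phi s = f s))].

Definition length_fun (W : groupType) (S : pred W) (l : W -> nat) : Prop :=
  forall w,
    (exists s : seq W, [/\ all S s, wprod s = w & size s = l w]) /\
    (forall s : seq W, all S s -> wprod s = w -> (l w <= size s)%N).

Definition reduced (W : groupType) (S : pred W) (l : W -> nat) (s : seq W) :=
  all S s /\ size s = l (wprod s).

(* Bruhat order: y <= w iff y is a subexpression of a reduced expression
   of w (subword property). *)
Definition bruhat_le (W : groupType) (S : pred W) (l : W -> nat) (y w : W) :=
  exists s : seq W, [/\ reduced S l s, wprod s = w &
                        exists m : bitseq, wprod (mask m s) = y].

Definition bruhat_lt (W : groupType) (S : pred W) (l : W -> nat) (y w : W) :=
  bruhat_le S l y w /\ y <> w.

Definition tot_ord_group (G : porderZmodType) : Prop :=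
  (forall a b : G, (a <= b) || (b <= a)) /\
  (forall a b c : G, a <= b -> a + c <= b + c).

Definition weight_fun (W : groupType) (S : pred W) (l : W -> nat)
    (G : porderZmodType) (L : W -> G) : Prop :=
  (forall s t : W, S s -> S t -> (exists x : W, t = (s ^ x)%g) -> L s = L t) /\
  (forall s : seq W, reduced S l s -> L (wprod s) = \sum_(x <- s) L x).

Definition zcomb (G : zmodType) (A : pzRingType) (v : G -> A)
    (r : seq (G * int)) : A := \sum_(p <- r) v p.1 *~ p.2.

(* (A, v) is the group ring Z[Gamma], v g standing for v^g:
   v is a monoid morphism (Gamma, +) -> (A, mul) and (v g)_g is a Z-basis. *)
Definition group_ring (G : zmodType) (A : comNzRingType) (v : G -> A) : Prop :=
  [/\ v 0 = 1,
      (forall a b, v (a + b) = v a * v b),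
      (forall a : A, exists r, a = zcomb v r) &
      (forall r : seq (G * int), uniq (map fst r) -> zcomb v r = 0 ->
                                 forall p, p \in r -> p.2 = 0)].

Definition zspan (G : zmodType) (A : pzRingType) (v : G -> A) (P : G -> Prop)
    (a : A) : Prop :=
  exists r : seq (G * int), (forall p, p \in r -> P p.1) /\ a = zcomb v r.

Definition twice (G : zmodType) (g : G) : Prop := exists h : G, g = h + h.

(* bar : Z[Gamma] -> Z[Gamma] is the ring involution v^g |-> v^{-g}
   (it is determined by additivity and its values on the basis) *)
Definition bar_spec (G : zmodType) (A : pzRingType) (v : G -> A) (bar : A -> A) :=
  (forall a b, bar (a + b) = bar a + bar b) /\ (forall g, bar (v g) = v (- g)).

Definition sign_hom (G : zmodType) (eps : G -> int) : Prop :=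
  (forall g, eps g = 1 \/ eps g = -1) /\ (forall a b, eps (a + b) = eps a * eps b).

Definition theta_spec (G : zmodType) (A : pzRingType) (v : G -> A)
    (eps : G -> int) (theta : A -> A) :=
  (forall a b, theta (a + b) = theta a + theta b) /\
  (forall g, theta (v g) = v g *~ eps g).

(* H is an A-algebra with basis (T w)_w (tcoef h y being the T_y-coordinate
   of h), T_1 = 1, and the defining multiplication rules
   T_s T_w = T_{sw} if l(sw) > l(w), T_s^2 = 1 + (v_s - v_s^{-1}) T_s. *)
Definition hecke_algebra (W : groupType) (S : pred W) (l : W -> nat)
    (G : zmodType) (L : W -> G) (A : comNzRingType) (v : G -> A)
    (H : algType A) (T : W -> H) (tcoef : H -> W -> A) : Prop :=
  [/\ (forall (a : A) (h1 h2 : H) y,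
         tcoef (a *: h1 + h2) y = a * tcoef h1 y + tcoef h2 y),
      (forall w y, tcoef (T w) y = if w == y then 1 else 0),
      (forall h, exists ys : seq W, h = \sum_(y <- ys) tcoef h y *: T y) &
      [/\ T 1%g = 1,
      (forall s w, S s -> (l w < l (s * w)%g)%N -> T s * T w = T (s * w)%g) &
      (forall s, S s -> T s * T s = 1 + (v (L s) - v (- L s)) *: T s)]].

Definition tinv_spec (W : groupType) (A : comNzRingType) (H : algType A)
    (T : W -> H) (Tinv : W -> H) : Prop :=
  forall w, T w * Tinv w = 1 /\ Tinv w * T w = 1.

Definition barH_spec (W : groupType) (A : comNzRingType) (bar : A -> A)
    (H : algType A) (T Tinv : W -> H) (barH : H -> H) : Prop :=
  (forall h1 h2, barH (h1 + h2) = barH h1 + barH h2) /\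
  (forall (a : A) w, barH (a *: T w) = bar a *: Tinv (w^-1)%g).

Definition kl_basis (W : groupType) (G : porderZmodType) (A : comNzRingType)
    (v : G -> A) (H : algType A) (T : W -> H) (barH : H -> H) (C : W -> H) :=
  forall w, barH (C w) = C w /\
    exists r : seq (W * A),
      (forall p, p \in r -> zspan v (fun g => 0 < g) p.2) /\
      C w = T w + \sum_(p <- r) p.2 *: T p.1.

Definition pstar_spec (W : groupType) (l : W -> nat) (A : comNzRingType)
    (bar : A -> A) (H : algType A) (tcoef : H -> W -> A) (C : W -> H)
    (Pstar : W -> W -> A) : Prop :=
  forall y w, tcoef (C w) y = (-1) ^+ (l y + l w) * bar (Pstar y w).

(* mu s y w = mu^s_{y,w}:  for s in S with sw > w,
     C_s C_w = C_{sw} + sum_{y < w} (-1)^{l(y)+l(w)+1} mu^s_{y,w} C_y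
   (the sum is over the finite Bruhat interval below w, enumerated by ys),
   and mu^s_{y,w} = 0 in all other cases. *)
Definition mu_spec (W : groupType) (S : pred W) (l : W -> nat)
    (A : comNzRingType) (H : algType A) (C : W -> H)
    (mu : W -> W -> W -> A) : Prop :=
  (forall s w, S s -> (l w < l (s * w)%g)%N ->
     exists ys : seq W,
       [/\ uniq ys, (forall y, y \in ys <-> bruhat_lt S l y w) &
           C s * C w = C (s * w)%g +
             \sum_(y <- ys) ((-1) ^+ (l y + l w + 1) * mu s y w) *: C y]) /\
  (forall s y w, ~ (S s /\ (l w < l (s * w)%g)%N /\ bruhat_lt S l y w) ->
     mu s y w = 0).

(* Main.v *)
Require Import Defs.
From HB Require Import structures.
From mathcomp Require Import all_boot all_order all_algebra all_fingroup.
From Stdlib Require Import Classical ClassicalEpsilon.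
Import Order.TTheory GRing.Theory Num.Theory.
Set Implicit Arguments.
Unset Strict Implicit.

Section Cox.
Variables (W : groupType) (S : pred W) (l : W -> nat).
Hypothesis hcox : coxeter_system S.
Hypothesis hlen : length_fun S l.

Lemma wprod_nil : wprod [::] = 1%g :> W. Proof. by rewrite /wprod big_nil. Qed.
Lemma wprod_cons (s : W) u : wprod (s :: u) = (s * wprod u)%g. Proof. by rewrite /wprod big_cons. Qed.
Lemma wprod_rcons (u : seq W) s : wprod (rcons u s) = (wprod u * s)%g.
Proof.
elim: u => [|x u IH]; first by rewrite /= wprod_cons wprod_nil mulg1 mul1g.
by rewrite rcons_cons !wprod_cons IH mulgA.
Qed.

Lemma Sinv s : S s -> (s * s = 1)%g.
Proof. by case: hcox => h _ _ /h []. Qed.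
Lemma Sinvg s : S s -> (s^-1 = s)%g.
Proof. by move=> /Sinv h; rewrite -[LHS]mulg1 -h mulgA mulVg mul1g. Qed.
Lemma SS s x : S s -> (s * (s * x) = x)%g.
Proof. by move=> /Sinv h; rewrite mulgA h mul1g. Qed.

Lemma l_le u x : all S u -> wprod u = x -> (l x <= size u)%N.
Proof. by move=> hu hx; case: (hlen x) => _ h; apply: h. Qed.
Lemma l_word x : exists u, [/\ all S u, wprod u = x & size u = l x].
Proof. by case: (hlen x). Qed.

Lemma l1 : l 1%g = 0%N.
Proof. by apply/eqP; rewrite -leqn0; apply: (@l_le [::]) => //; rewrite wprod_nil. Qed.

Lemma l0 x : l x = 0%N -> x = 1%g.
Proof. by move=> h; have [u [_ eu su]] := l_word x; move: su; rewrite h => /size0nil e; rewrite -eu e wprod_nil. Qed.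

Lemma l_mul_le s x : S s -> (l (s * x)%g <= (l x).+1)%N.
Proof.
move=> Ss; have [u [au <- su]] := l_word x.
by rewrite -su; apply: (@l_le (s :: u)); rewrite /= ?Ss ?au ?wprod_cons.
Qed.

Lemma parity s x : S s -> odd (l (s * x)%g) = ~~ odd (l x).
Proof.
move=> Ss; case: hcox => _ _ /(_ _ (fun _ : W => tperm (ord0 : 'I_2) (ord_max : 'I_2))) [].
  by move=> s' t n _ _ _; rewrite tperm2 expg1n.
move=> phi [phiM phiS].
have par : forall u, all S u -> odd_perm (phi (wprod u)) = odd (size u).
  elim=> [|y u IH] /=.
    move=> _; rewrite wprod_nil.
    have e : phi 1%g = 1%g by apply: (mulgI (phi 1%g)); rewrite -phiM !mulg1.
    by rewrite e odd_perm1.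
  move=> /andP [Sy au]; rewrite wprod_cons phiM odd_permM IH // phiS // odd_tperm /=.
  by case: (odd _).
have [u [au eu su]] := l_word x; have [u' [au' eu' su']] := l_word (s * x)%g.
rewrite -su -su' -par // -par // eu eu' phiM odd_permM phiS // odd_tperm /=.
by case: (odd_perm _).
Qed.

Lemma lsx s x : S s -> l (s * x)%g = (l x).+1 \/ l x = (l (s * x)%g).+1.
Proof.
move=> Ss; have h1 := l_mul_le x Ss; have h2 := l_mul_le (s * x)%g Ss.
rewrite SS // in h2; have p := parity x Ss.
case: (ltngtP (l (s * x)%g) (l x)) => h.
- by right; apply/eqP; rewrite eqn_leq h2 h.
- by left; apply/eqP; rewrite eqn_leq h1 h.
- by move: p; rewrite h; case: (odd _).
Qed.

Lemma wprod_rev u : all S u -> wprod (rev u) = (wprod u)^-1%g.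
Proof.
elim: u => [|s u IH] /=; first by rewrite wprod_nil invg1.
by move=> /andP [Ss au]; rewrite rev_cons wprod_rcons wprod_cons IH // invgM (Sinvg Ss).
Qed.

Lemma l_inv x : l x^-1%g = l x.
Proof.
have h : forall y, (l y^-1%g <= l y)%N.
  move=> y; have [u [au <- su]] := l_word y; rewrite -su -size_rev.
  by apply: l_le; [rewrite all_rev|rewrite wprod_rev].
by apply/eqP; rewrite eqn_leq h /=; have := h x^-1%g; rewrite invgK.
Qed.

Lemma reduced_rev u : reduced S l u -> reduced S l (rev u).
Proof. by move=> [au su]; split; rewrite ?all_rev // wprod_rev // l_inv size_rev. Qed.

Lemma reduced_tail s u : reduced S l (s :: u) -> reduced S l u /\ (l (wprod u) < l (s * wprod u)%g)%N.
Proof.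
move=> [/= /andP [Ss au] su]; rewrite wprod_cons in su.
have h1 := l_le au (erefl _); have h2 := l_mul_le (wprod u) Ss.
rewrite -su /= in h2; split; first by split => //; apply/eqP; rewrite eqn_leq h1 andbT -ltnS.
by rewrite -su; apply: leq_trans h1 _.
Qed.

Lemma reduced_cons s x : S s -> (l x < l (s * x)%g)%N ->
  exists u, [/\ reduced S l (s :: u), reduced S l u & wprod u = x].
Proof.
move=> Ss hl; have [u [au eu su]] := l_word x; exists u.
have ru : reduced S l u by split => //; rewrite eu.
split=> //; split; first by rewrite /= Ss.
rewrite wprod_cons eu /= su; case: (lsx x Ss) => h; first by rewrite h.
by move: hl; rewrite h ltnNge leqnSn.
Qed.

Lemma reduced_word x : exists u, reduced S l u /\ wprod u = x.
Proof. by have [u [au eu su]] := l_word x; exists u; split => //; split => //; rewrite eu. Qed.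
End Cox.

Local Open Scope ring_scope.

Section GR.
Variables (G : zmodType) (A : comNzRingType) (v : G -> A).

Lemma zcomb_nil : zcomb v [::] = 0.
Proof. by rewrite /zcomb big_nil. Qed.
Lemma zcomb_cons p r : zcomb v (p :: r) = v p.1 *~ p.2 + zcomb v r.
Proof. by rewrite /zcomb big_cons. Qed.
Lemma zcomb_cat r1 r2 : zcomb v (r1 ++ r2) = zcomb v r1 + zcomb v r2.
Proof. by rewrite /zcomb big_cat. Qed.

Lemma zspan0 P : zspan v P 0.
Proof. by exists [::]; split => //; rewrite zcomb_nil. Qed.
Lemma zspanD P a b : zspan v P a -> zspan v P b -> zspan v P (a + b).
Proof.
move=> [r1 [H1 ->]] [r2 [H2 ->]]; exists (r1 ++ r2); split; last by rewrite zcomb_cat.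
by move=> p; rewrite mem_cat => /orP [] ?; [apply: H1|apply: H2].
Qed.
Lemma zcomb_mulrz r n : zcomb v r *~ n = zcomb v (map (fun p => (p.1, p.2 * n)) r).
Proof.
elim: r => [|p r IH]; first by rewrite zcomb_nil mul0rz.
by rewrite /= !zcomb_cons mulrzDl IH mulrzA.
Qed.
Lemma zspanMz P a n : zspan v P a -> zspan v P (a *~ n).
Proof.
move=> [r [Hr ->]]; exists (map (fun p => (p.1, p.2 * n)) r); split; last by rewrite zcomb_mulrz.
by move=> p /mapP [q qr ->] /=; apply: Hr.
Qed.
Lemma zspanN P a : zspan v P a -> zspan v P (- a).
Proof. by move=> h; rewrite -mulrN1z; apply: zspanMz h. Qed.
Lemma zspanB P a b : zspan v P a -> zspan v P b -> zspan v P (a - b).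
Proof. by move=> ha hb; apply: zspanD => //; apply: zspanN. Qed.
Lemma zspan_mono (P Q : G -> Prop) a : (forall g, P g -> Q g) -> zspan v P a -> zspan v Q a.
Proof. by move=> PQ [r [Hr ->]]; exists r; split => // p /Hr /PQ. Qed.
Lemma zspan_v (P : G -> Prop) g n : P g -> zspan v P (v g *~ n).
Proof. by move=> Pg; exists [:: (g, n)]; split; [move=> p; rewrite inE => /eqP ->|rewrite zcomb_cons zcomb_nil addr0]. Qed.
Lemma zspan_v1 (P : G -> Prop) g : P g -> zspan v P (v g).
Proof. by move=> Pg; rewrite -[v g]mulr1z; apply: zspan_v. Qed.
Lemma zspan_sum P (I : Type) (r : seq I) (F : I -> A) :
  (forall i, zspan v P (F i)) -> zspan v P (\sum_(i <- r) F i).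
Proof.
move=> HF; elim: r => [|i r IH]; first by rewrite big_nil; apply: zspan0.
by rewrite big_cons; apply: zspanD.
Qed.

Lemma zspan_sum_in P (I : eqType) (r : seq I) (F : I -> A) :
  (forall i, i \in r -> zspan v P (F i)) -> zspan v P (\sum_(i <- r) F i).
Proof.
elim: r => [|i r IH] HF; first by rewrite big_nil; apply: zspan0.
rewrite big_cons; apply: zspanD; first by apply: HF; rewrite inE eqxx.
by apply: IH => j jr; apply: HF; rewrite inE jr orbT.
Qed.

Lemma zspan_split (P X : G -> Prop) a : zspan v P a ->
  exists a1 a2, [/\ a = a1 + a2, zspan v (fun g => P g /\ X g) a1 &
                    zspan v (fun g => P g /\ ~ X g) a2].
Proof.
move=> [r [Hr ->]]; elim: r Hr => [|p r IH] Hr.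
  by exists 0, 0; rewrite zcomb_nil addr0; split => //; apply: zspan0.
have [a1 [a2 [e h1 h2]]] : exists a1 a2, [/\ zcomb v r = a1 + a2, zspan v (fun g => P g /\ X g) a1 &
                    zspan v (fun g => P g /\ ~ X g) a2].
  by apply: IH => q qr; apply: Hr; rewrite inE qr orbT.
have Pp : P p.1 by apply: Hr; rewrite inE eqxx.
rewrite zcomb_cons e; case: (classic (X p.1)) => Xp.
  exists (v p.1 *~ p.2 + a1), a2; split => //; first by rewrite addrA.
  by apply: zspanD => //; apply: zspan_v.
exists a1, (v p.1 *~ p.2 + a2); split => //; first by rewrite addrCA.
by apply: zspanD => //; apply: zspan_v.
Qed.

Lemma zcomb_norm (P : G -> Prop) a : zspan v P a ->
  exists r, [/\ uniq (map fst r), (forall p, p \in r -> P p.1) & a = zcomb v r].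
Proof.
move=> [r [Hr ->]]; elim: r Hr => [|p r IH] Hr.
  by exists [::].
have [r0 [u0 H0 e0]] : exists r0, [/\ uniq (map fst r0), (forall p, p \in r0 -> P p.1) & zcomb v r = zcomb v r0].
  by apply: IH => q qr; apply: Hr; rewrite inE qr orbT.
have Pp : P p.1 by apply: Hr; rewrite inE eqxx.
pose s := \sum_(q <- r0 | q.1 == p.1) q.2.
exists ((p.1, p.2 + s) :: filter (fun q => q.1 != p.1) r0); split.
- rewrite /= (_ : map fst _ = filter (fun g => g != p.1) (map fst r0)); last by rewrite filter_map.
  rewrite filter_uniq // andbT; apply/negP.
  by rewrite mem_filter eqxx.
- move=> q; rewrite inE => /orP [/eqP -> //|]; rewrite mem_filter => /andP [_]; apply: H0.
- rewrite zcomb_cons zcomb_cons e0 /= /zcomb big_filter [in LHS](bigID (fun q => q.1 == p.1)) /=.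
  rewrite addrA; congr (_ + _); rewrite mulrzDr; congr (_ + _).
  rewrite /s mulrz_sumr; apply: eq_bigr => q /eqP -> //.
Qed.

Lemma zcomb0 r : (forall p, p \in r -> p.2 = 0) -> zcomb v r = 0.
Proof.
move=> h; rewrite /zcomb big_seq big1 // => p /h ->; exact: mulr0z.
Qed.

Hypothesis hv : group_ring v.

Lemma zspan_disj (P Q : G -> Prop) a : (forall g, P g -> Q g -> False) ->
  zspan v P a -> zspan v Q a -> a = 0.
Proof.
move=> PQ /zcomb_norm [r1 [u1 H1 e1]] /zcomb_norm [r2 [u2 H2 e2]].
case: hv => _ _ _ indep.
have key : zcomb v (r1 ++ map (fun p => (p.1, - p.2)) r2) = 0.
  rewrite zcomb_cat -e1.
  have -> : zcomb v (map (fun p => (p.1, - p.2)) r2) = - zcomb v r2.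
    rewrite -mulrN1z zcomb_mulrz; congr zcomb; apply: eq_map => p; by rewrite mulrN1.
  by rewrite -e2 subrr.
have U : uniq (map fst (r1 ++ map (fun p => (p.1, - p.2)) r2)).
  rewrite map_cat cat_uniq u1 -map_comp.
  have -> : [seq (fst \o (fun p : G * int => (p.1, - p.2))) i | i <- r2] = map fst r2 by apply: eq_map.
  rewrite u2 andbT; apply/hasPn => g /mapP [p pr ->]; apply/negP => /mapP [q qr eq].
  by apply: (PQ p.1); [rewrite eq; apply: H1 | apply: H2].
rewrite e1; apply: zcomb0 => p pr; apply: (indep _ U key); by rewrite mem_cat pr.
Qed.

Lemma zspanM (P Q R : G -> Prop) a b :
  (forall g h, P g -> Q h -> R (g + h)) -> zspan v P a -> zspan v Q b -> zspan v R (a * b).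
Proof.
move=> PQR [r1 [H1 ->]] [r2 [H2 ->]]; case: hv => _ vD _ _.
rewrite /zcomb big_distrl /=; apply: zspan_sum_in => p pr.
rewrite big_distrr /=; apply: zspan_sum_in => q qr.
rewrite mulrzAl mulrzAr -vD; apply: zspanMz; apply: zspanMz; apply: zspan_v1.
by apply: PQR; [apply: H1|apply: H2].
Qed.
End GR.

Section Add.
Variables (A : zmodType) (B : zmodType) (f : A -> B).
Hypothesis fD : forall a b, f (a + b) = f a + f b.
Lemma addf0 : f 0 = 0.
Proof. by apply: (addIr (f 0)); rewrite -fD !add0r. Qed.
Lemma addfN a : f (- a) = - f a.
Proof. by apply: (addIr (f a)); rewrite -fD !addNr addf0. Qed.
Lemma addfB a b : f (a - b) = f a - f b.
Proof. by rewrite fD addfN. Qed.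
Lemma addfMn a n : f (a *+ n) = f a *+ n.
Proof. by elim: n => [|n IH]; rewrite ?mulr0n ?addf0 // !mulrS fD IH. Qed.
Lemma addfMz a n : f (a *~ n) = f a *~ n.
Proof. by case: n => n; rewrite ?NegzE ?mulrNz ?addfN /= addfMn. Qed.
Lemma addf_sum (I : Type) (r : seq I) (F : I -> A) : f (\sum_(i <- r) F i) = \sum_(i <- r) f (F i).
Proof. by elim: r => [|i r IH]; rewrite ?big_nil ?addf0 // !big_cons fD IH. Qed.
End Add.

Section Twice.
Variable G : zmodType.
Definition K (c g : G) := twice (g - c).
Lemma twice0 : twice (0 : G). Proof. by exists 0; rewrite addr0. Qed.
Lemma twiceD (a b : G) : twice a -> twice b -> twice (a + b).
Proof. by move=> [x ->] [y ->]; exists (x + y); rewrite addrACA. Qed.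
Lemma twiceN (a : G) : twice a -> twice (- a).
Proof. by move=> [x ->]; exists (- x); rewrite opprD. Qed.
Lemma twiceDD (a : G) : twice (a + a). Proof. by exists a. Qed.
Lemma twiceE (a b : G) : twice (a - b) -> twice a -> twice b.
Proof. by move=> h1 h2; have := twiceD (twiceN h1) h2; rewrite opprB subrK. Qed.
Lemma twice_eq (a b : G) : a = b -> twice a -> twice b. Proof. by move=> ->. Qed.
Lemma E2 (w y h : G) : (w - y) + h = (h - (w + y)) + (w + w).
Proof.
rewrite opprD [RHS]addrC [RHS]addrA [RHS]addrC [RHS]addrA [RHS]addrC (addrACA (- w)) addNr add0r (addrC (- y)).
by rewrite addrC.
Qed.
Lemma E3 (w y s h : G) : (w - y + s) + h = (h - (w + y + s)) + ((w + s) + (w + s)).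
Proof.
have e1 : w - y + s = (w + s) - y by rewrite addrAC.
have e2 : w + y + s = (w + s) + y by rewrite addrAC.
by rewrite e1 e2; apply: E2.
Qed.
Lemma E1 (s w z : G) : (s + w) - (z + (w + z + s)) = - (z + z).
Proof.
have -> : w + z + s = (s + w) + z by rewrite addrAC (addrC w s).
by rewrite addrCA opprD addrA subrr add0r.
Qed.
End Twice.

Section Theta.
Variables (G : zmodType) (A : comNzRingType) (v : G -> A).
Hypothesis hv : group_ring v.

Lemma eps_even (eps : G -> int) h : sign_hom eps -> eps (h + h) = 1.
Proof. by move=> [pm mD]; rewrite mD; case: (pm h) => ->. Qed.

Lemma theta_K (eps : G -> int) (theta : A -> A) c a : sign_hom eps -> theta_spec v eps theta ->
  zspan v (K c) a -> theta a = a *~ eps c.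
Proof.
move=> se [tD tv] [r [Hr ->]]; rewrite /zcomb (addf_sum tD) mulrz_suml.
rewrite big_seq [RHS]big_seq; apply: eq_bigr => p pr.
rewrite (addfMz tD) tv; have [h eh] := Hr p pr.
have -> : p.1 = c + (h + h) by rewrite -eh addrC subrK.
by case: se => pm mD; rewrite mD (eps_even h (conj pm mD)) mulr1 mulrzAC.
Qed.

Lemma signK k (x : A) : (-1) ^+ k * ((-1) ^+ k * x) = x.
Proof. by rewrite mulrA -exprMn mulrNN mulr1 expr1n mul1r. Qed.

Lemma zspan_sign P k a : zspan v P a -> zspan v P ((-1) ^+ k * a).
Proof.
move=> ha; elim: k => [|k IH]; first by rewrite expr0 mul1r.
by rewrite exprS -mulrA mulN1r; apply: zspanN.
Qed.

Variable bar : A -> A.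
Hypothesis hbar : bar_spec v bar.

Lemma bar_sign k a : bar ((-1) ^+ k * a) = (-1) ^+ k * bar a.
Proof.
case: hbar => bD _; elim: k => [|k IH]; first by rewrite !expr0 !mul1r.
by rewrite exprS -!mulrA !mulN1r (addfN bD) IH.
Qed.

Lemma barK a : bar (bar a) = a.
Proof.
case: hv => _ _ hs _; case: hbar => bD bv; have [r ->] := hs a.
rewrite /zcomb !(addf_sum bD); apply: eq_bigr => p _.
by rewrite !(addfMz bD) !bv opprK.
Qed.
End Theta.

Section KLemmas.
Variable G : zmodType.
Lemma K_QK (c d g g' : G) : K c g -> K d g' -> K (c + d) (g + g').
Proof. by move=> h1 h2; rewrite /K opprD addrACA; apply: twiceD. Qed.
Lemma K_sh (c c' g : G) : twice (c' - c) -> K c g -> K c' g.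
Proof.
move=> h1 h2; rewrite /K; have := twiceD h2 (twiceN h1).
by rewrite opprB addrA subrK.
Qed.
Lemma K_N (c g : G) : K c g -> K c (- g).
Proof.
move=> h; rewrite /K; have := twiceD (twiceN h) (twiceN (twiceDD c)).
apply: twice_eq; by rewrite opprB opprD addrA addrC -(addrA c) addKr.
Qed.
Lemma NK_QK (c d g g' : G) : ~ K c g -> K d g' -> ~ K (c + d) (g + g').
Proof.
move=> h1 h2 h3; apply: h1; rewrite /K; have := twiceD h3 (twiceN h2).
apply: twice_eq; by rewrite opprB opprD (addrACA g g') -[d - g']opprB addrK.
Qed.
Lemma NK_sh (c c' g : G) : twice (c' - c) -> ~ K c g -> ~ K c' g.
Proof. by move=> h1 h2 h3; apply: h2; apply: (K_sh _ h3); rewrite -opprB; apply: twiceN. Qed.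
Lemma NK_N (c g : G) : ~ K c g -> ~ K c (- g).
Proof. by move=> h1 h2; apply: h1; rewrite -[g]opprK; apply: K_N. Qed.
End KLemmas.

Lemma tw_shift (G : zmodType) (c c' x : G) : twice (c' - c) -> twice ((c' + x) - (c + x)).
Proof. by apply: twice_eq; rewrite opprD addrACA subrr addr0. Qed.

Section Hecke.
Variables (W : groupType) (S : pred W) (l : W -> nat) (G : porderZmodType) (L : W -> G)
  (A : comNzRingType) (v : G -> A) (bar : A -> A) (H : algType A) (T Tinv : W -> H)
  (tcoef : H -> W -> A) (barH : H -> H).
Hypothesis hcox : coxeter_system S.
Hypothesis hlen : length_fun S l.
Hypothesis hw : weight_fun S l L.
Hypothesis hv : group_ring v.
Hypothesis hbar : bar_spec v bar.
Hypothesis hH : hecke_algebra S l L v T tcoef.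
Hypothesis htinv : tinv_spec T Tinv.
Hypothesis hbarH : barH_spec bar T Tinv barH.

Lemma tcoef_lin a h1 h2 y : tcoef (a *: h1 + h2) y = a * tcoef h1 y + tcoef h2 y.
Proof. by case: hH => h _ _ _; apply: h. Qed.
Lemma tcoefD h1 h2 y : tcoef (h1 + h2) y = tcoef h1 y + tcoef h2 y.
Proof. by rewrite -{1}[h1]scale1r tcoef_lin mul1r. Qed.
Lemma tcoef0 y : tcoef 0 y = 0.
Proof. exact: (addf0 (f := tcoef^~ y) (fun a b => tcoefD a b y)). Qed.
Lemma tcoefZ a h y : tcoef (a *: h) y = a * tcoef h y.
Proof. by rewrite -[a *: h]addr0 tcoef_lin tcoef0 addr0. Qed.
Lemma tcoefN h y : tcoef (- h) y = - tcoef h y.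
Proof. exact: (addfN (f := tcoef^~ y) (fun a b => tcoefD a b y)). Qed.
Lemma tcoefB h1 h2 y : tcoef (h1 - h2) y = tcoef h1 y - tcoef h2 y.
Proof. by rewrite tcoefD tcoefN. Qed.
Lemma tcoef_sum (I : Type) (r : seq I) (F : I -> H) y :
  tcoef (\sum_(i <- r) F i) y = \sum_(i <- r) tcoef (F i) y.
Proof. exact: (addf_sum (f := tcoef^~ y) (fun a b => tcoefD a b y)). Qed.
Lemma tcoefT w y : tcoef (T w) y = if w == y then 1 else 0.
Proof. by case: hH => _ h _ _; apply: h. Qed.

Lemma coef_sumT (ys : seq W) (c : W -> A) z : uniq ys ->
  tcoef (\sum_(y <- ys) c y *: T y) z = if z \in ys then c z else 0.
Proof.
move=> u; rewrite tcoef_sum; under eq_bigr => y _ do rewrite tcoefZ tcoefT.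
case: ifP => zy.
  rewrite (bigD1_seq z) //= eqxx mulr1 big1 ?addr0 // => y /negbTE; rewrite eq_sym => ->.
  by rewrite mulr0.
rewrite big_seq big1 // => y yy; case: eqP => [e|]; last by rewrite mulr0.
by move: zy; rewrite -e yy.
Qed.

Lemma hext h h' : (forall y, tcoef h y = tcoef h' y) -> h = h'.
Proof.
move=> e; apply/eqP; rewrite -subr_eq0; apply/eqP.
case: hH => _ _ h3 _; have [ys ->] := h3 (h - h').
by rewrite big1 // => y _; rewrite tcoefB e subrr scale0r.
Qed.

Lemma supp h : exists ys : seq W, [/\ uniq ys, (forall y, y \notin ys -> tcoef h y = 0) &
  h = \sum_(y <- ys) tcoef h y *: T y].
Proof.
case: hH => _ _ h3 _; have [ys e] := h3 h.
have z0 : forall y, y \notin ys -> tcoef h y = 0.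
  move=> y yn; rewrite e tcoef_sum big_seq big1 // => z zy.
  rewrite tcoefZ tcoefT; case: eqP => [ez|]; last by rewrite mulr0.
  by move: yn; rewrite -ez zy.
exists (undup ys); split; first exact: undup_uniq.
  by move=> y; rewrite mem_undup; apply: z0.
apply: hext => z; rewrite coef_sumT ?undup_uniq // mem_undup.
by case: ifP => // /negbT /z0.
Qed.

Definition kk s := v (L s) - v (- L s).

Lemma TT_up s y : S s -> (l y < l (s * y)%g)%N -> T s * T y = T (s * y)%g.
Proof. by case: hH => _ _ _ [_ h _]; apply: h. Qed.
Lemma Ts2 s : S s -> T s * T s = 1 + kk s *: T s.
Proof. by case: hH => _ _ _ [_ _ h]; apply: h. Qed.
Lemma T1 : T 1%g = 1.
Proof. by case: hH => _ _ _ [h _ _]. Qed.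

Lemma TT_down s y : S s -> (l (s * y)%g < l y)%N -> T s * T y = T (s * y)%g + kk s *: T y.
Proof.
move=> Ss hl.
have ey : T y = T s * T (s * y)%g by rewrite TT_up //; rewrite (SS hcox _ Ss).
by rewrite {1}ey mulrA Ts2 // mulrDl mul1r -scalerAl -ey.
Qed.

Lemma Tinv_s s : S s -> Tinv s = T s - kk s *: 1.
Proof.
move=> Ss; have e : T s * (T s - kk s *: 1) = 1.
  by rewrite mulrBr -scalerAr mulr1 Ts2 // addrK.
case: (htinv s) => _ e2.
transitivity (Tinv s * (T s * (T s - kk s *: 1))); first by rewrite e mulr1.
by rewrite mulrA e2 mul1r.
Qed.

Lemma L_red u : reduced S l u -> L (wprod u) = \sum_(x <- u) L x.
Proof. by case: hw => _ h; apply: h. Qed.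
Lemma L_cons s u : reduced S l (s :: u) -> L (s * wprod u)%g = L s + L (wprod u).
Proof.
move=> r; have [ru _] := reduced_tail hlen r.
by rewrite -wprod_cons L_red // big_cons L_red.
Qed.
Lemma L_up s y : S s -> (l y < l (s * y)%g)%N -> L (s * y)%g = L s + L y.
Proof.
move=> Ss hl; have [u [r ru <-]] := reduced_cons hcox hlen Ss hl; exact: L_cons.
Qed.
Lemma L1 : L 1%g = 0.
Proof.
rewrite -(wprod_nil W) L_red ?big_nil //; split => //=; by rewrite wprod_nil (l1 hlen).
Qed.
Lemma L_inv x : L x^-1%g = L x.
Proof.
have [u [ru <-]] := reduced_word hlen x; have [au _] := ru.
by rewrite -(wprod_rev hcox) // !L_red ?big_rev //; apply: (reduced_rev hcox hlen).
Qed.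

Lemma prodT u : reduced S l u -> T (wprod u) = \prod_(x <- u) T x.
Proof.
elim: u => [|s u IH] r; first by rewrite wprod_nil big_nil T1.
have [ru hl] := reduced_tail hlen r; have [/= /andP [Ss _] _] := r.
by rewrite wprod_cons -TT_up // IH // big_cons.
Qed.

Lemma Tinv_prod u : reduced S l u -> Tinv (wprod u)^-1%g = \prod_(x <- u) Tinv x.
Proof.
move=> r; have [au _] := r.
have QP : forall u, all S u -> (\prod_(x <- rev u) T x) * (\prod_(x <- u) Tinv x) = 1.
  elim=> [|s u' IH] /=; first by rewrite !big_nil mulr1.
  move=> /andP [Ss au']; rewrite rev_cons -cats1 big_cat big_seq1 big_cons.
  case: (htinv s) => e1 _; by rewrite -mulrA (mulrA (T s)) e1 mul1r IH.
have eT : T (wprod u)^-1%g = \prod_(x <- rev u) T x.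
  by rewrite -(wprod_rev hcox) // prodT //; apply: (reduced_rev hcox hlen).
case: (htinv (wprod u)^-1%g) => _ e2.
transitivity (Tinv (wprod u)^-1%g * ((\prod_(x <- rev u) T x) * (\prod_(x <- u) Tinv x))).
  by rewrite QP // mulr1.
by rewrite mulrA -eT e2 mul1r.
Qed.

Definition HC (Q : G -> G -> Prop) c h := forall y, zspan v (Q (c + L y)) (tcoef h y).

Lemma kk_span s : zspan v (K (L s)) (kk s).
Proof.
apply: zspanB; apply: zspan_v1; rewrite /K; first by rewrite subrr; apply: twice0.
by rewrite -opprD; apply: twiceN; apply: twiceDD.
Qed.

Section Gen.
Variable Q : G -> G -> Prop.
Hypothesis QK : forall c d g g', Q c g -> K d g' -> Q (c + d) (g + g').
Hypothesis Qsh : forall c c' g, twice (c' - c) -> Q c g -> Q c' g.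
Hypothesis QN : forall c g, Q c g -> Q c (- g).

Lemma HC0 c : HC Q c 0.
Proof. by move=> y; rewrite tcoef0; apply: zspan0. Qed.
Lemma HCD c h1 h2 : HC Q c h1 -> HC Q c h2 -> HC Q c (h1 + h2).
Proof. by move=> a b y; rewrite tcoefD; apply: zspanD. Qed.
Lemma HCN c h : HC Q c h -> HC Q c (- h).
Proof. by move=> a y; rewrite tcoefN; apply: zspanN. Qed.
Lemma HCB c h1 h2 : HC Q c h1 -> HC Q c h2 -> HC Q c (h1 - h2).
Proof. by move=> a b; apply: HCD => //; apply: HCN. Qed.
Lemma HC_sum c (I : Type) (r : seq I) (F : I -> H) :
  (forall i, HC Q c (F i)) -> HC Q c (\sum_(i <- r) F i).
Proof.
move=> hF; elim: r => [|i r IH]; first by rewrite big_nil; apply: HC0.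
by rewrite big_cons; apply: HCD.
Qed.
Lemma HC_sh c c' h : twice (c' - c) -> HC Q c h -> HC Q c' h.
Proof. by move=> tw hc y; apply: zspan_mono (hc y) => g; apply: Qsh; apply: tw_shift. Qed.
Lemma HC_eq c c' h : c = c' -> HC Q c h -> HC Q c' h.
Proof. by move=> ->. Qed.

Lemma HC_aT c y a : zspan v (Q (c + L y)) a -> HC Q c (a *: T y).
Proof.
move=> ha z; rewrite tcoefZ tcoefT; case: eqP => [<-|_]; first by rewrite mulr1.
by rewrite mulr0; apply: zspan0.
Qed.

Lemma HC_scaleK c e a h : zspan v (K e) a -> HC Q c h -> HC Q (c + e) (a *: h).
Proof.
move=> ha hc y; rewrite tcoefZ; apply: (zspanM hv _ ha (hc y)) => g g' Kg Qg'.
by rewrite (addrC g g') (addrAC c e); apply: QK.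
Qed.

Lemma HC_Ts c s h : S s -> HC Q c h -> HC Q (c + L s) (T s * h).
Proof.
move=> Ss hc; have [ys [_ _ e]] := supp h; rewrite e mulr_sumr.
apply: HC_sum => y; rewrite -scalerAr; have ty := hc y.
case: (lsx hcox hlen y Ss) => hl.
  rewrite TT_up //; last by rewrite hl.
  apply: HC_aT; apply: zspan_mono ty => g; apply: Qsh.
  rewrite L_up //; last by rewrite hl.
  apply: twice_eq (twiceDD (L s)).
  by rewrite (addrC (L s) (L y)) addrACA [RHS]addrC addKr.
rewrite TT_down //; last by rewrite hl.
rewrite scalerDr scalerA; apply: HCD; apply: HC_aT.
  have ey : L y = L s + L (s * y)%g.
    by rewrite -{1}(SS hcox y Ss) L_up // (SS hcox y Ss) hl.
  by rewrite -addrA -ey.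
apply: (zspanM hv _ ty (kk_span s)) => g g' Qg Kg'.
by rewrite (addrAC c (L s)); apply: QK.
Qed.

Lemma HC_Tw c u h : reduced S l u -> HC Q c h -> HC Q (c + L (wprod u)) (T (wprod u) * h).
Proof.
elim: u c h => [|s u IH] c h r hc.
  by rewrite wprod_nil L1 addr0 T1 mul1r.
have [ru hl] := reduced_tail hlen r; have [/= /andP [Ss _] _] := r.
rewrite wprod_cons -TT_up // -mulrA L_cons // (addrC (L s)) addrA.
by apply: HC_Ts => //; apply: IH.
Qed.

Lemma HC_Tx c x h : HC Q c h -> HC Q (c + L x) (T x * h).
Proof. by have [u [ru <-]] := reduced_word hlen x; apply: HC_Tw. Qed.

Lemma HC_Tinvs c s h : S s -> HC Q c h -> HC Q (c + L s) (Tinv s * h).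
Proof.
move=> Ss hc; rewrite Tinv_s // mulrBl -scalerAl mul1r.
by apply: HCB; [apply: HC_Ts|apply: HC_scaleK => //; apply: kk_span].
Qed.

Lemma HC_Tinvw c u h : reduced S l u -> HC Q c h ->
  HC Q (c + L (wprod u)) ((\prod_(x <- u) Tinv x) * h).
Proof.
elim: u c h => [|s u IH] c h r hc.
  by rewrite wprod_nil L1 addr0 big_nil mul1r.
have [ru hl] := reduced_tail hlen r; have [/= /andP [Ss _] _] := r.
rewrite big_cons wprod_cons -mulrA L_cons // (addrC (L s)) addrA.
by apply: HC_Tinvs => //; apply: IH.
Qed.

Lemma HC_mulK c d h1 h2 : HC (@K G) c h1 -> HC Q d h2 -> HC Q (c + d) (h1 * h2).
Proof.
move=> h1c h2d; have [ys [_ _ e]] := supp h1; rewrite e mulr_suml.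
apply: HC_sum => y; rewrite -scalerAl.
apply: (HC_sh (c := d + L y + (c + L y))).
  apply: twice_eq (twiceN (twiceDD (L y))).
  by rewrite (addrACA d) (addrC d c) [in RHS]opprD [in RHS]addrA subrr add0r.
by apply: HC_scaleK (h1c y) _; apply: HC_Tx.
Qed.
End Gen.

Lemma K_Qs : [/\ forall (c d g g' : G), K c g -> K d g' -> K (c + d) (g + g'),
  forall (c c' g : G), twice (c' - c) -> K c g -> K c' g &
  forall (c g : G), K c g -> K c (- g)].
Proof. split; [exact: K_QK|exact: K_sh|exact: K_N]. Qed.
Lemma NK_Qs : [/\ forall (c d g g' : G), ~ K c g -> K d g' -> ~ K (c + d) (g + g'),
  forall (c c' g : G), twice (c' - c) -> ~ K c g -> ~ K c' g &
  forall (c g : G), ~ K c g -> ~ K c (- g)].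
Proof. split; [exact: NK_QK|exact: NK_sh|exact: NK_N]. Qed.

Lemma HK_T x : HC (@K G) (L x) (T x).
Proof.
move=> y; rewrite tcoefT; case: eqP => [<-|_]; last by apply: zspan0.
case: hv => v0 _ _ _; rewrite -v0; apply: zspan_v1.
by rewrite /K sub0r; apply: twiceN; apply: twiceDD.
Qed.

Lemma HK_Tinv x : HC (@K G) (L x) (Tinv x^-1%g).
Proof.
have [u [ru <-]] := reduced_word hlen x; rewrite Tinv_prod //.
have := HK_T 1%g; rewrite T1 L1 => h.
case: K_Qs => a b c.
by have := @HC_Tinvw (@K G) a b 0 u 1 ru h; rewrite mulr1 add0r.
Qed.

Lemma barH_add h1 h2 : barH (h1 + h2) = barH h1 + barH h2.
Proof. by case: hbarH. Qed.
Lemma barH_aT a w : barH (a *: T w) = bar a *: Tinv w^-1%g.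
Proof. by case: hbarH => _; apply. Qed.
Lemma bar_add a b : bar (a + b) = bar a + bar b.
Proof. by case: hbar. Qed.
Lemma bar_v g : bar (v g) = v (- g).
Proof. by case: hbar. Qed.

Lemma bar_zspan P a : zspan v P a -> zspan v (fun g => P (- g)) (bar a).
Proof.
move=> [r [Hr ->]]; rewrite /zcomb (addf_sum bar_add); apply: zspan_sum_in => p pr.
rewrite (addfMz bar_add) bar_v; apply: zspan_v; rewrite opprK; exact: Hr.
Qed.

Section Gen2.
Variable Q : G -> G -> Prop.
Hypothesis QK : forall c d g g', Q c g -> K d g' -> Q (c + d) (g + g').
Hypothesis Qsh : forall c c' g, twice (c' - c) -> Q c g -> Q c' g.
Hypothesis QN : forall c g, Q c g -> Q c (- g).

Lemma HC_scaleQ c e a h : zspan v (Q e) a -> HC (@K G) c h -> HC Q (c + e) (a *: h).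
Proof.
move=> ha hc y; rewrite tcoefZ; apply: (zspanM hv _ ha (hc y)) => g g' Qg Kg'.
by rewrite (addrAC c e) addrC; apply: QK.
Qed.

Lemma HC_bar c h : HC Q c h -> HC Q c (barH h).
Proof.
move=> hc; have [ys [_ _ e]] := supp h; rewrite e (addf_sum barH_add).
apply: HC_sum => y; rewrite barH_aT.
apply: (HC_sh Qsh (c := L y + (c + L y))).
  apply: twice_eq (twiceN (twiceDD (L y))).
  by rewrite [in RHS](addrCA (L y)) [in RHS]opprD [in RHS]addrA subrr add0r.
apply: HC_scaleQ; last exact: HK_Tinv.
apply: zspan_mono (bar_zspan (hc y)) => g /QN; by rewrite opprK.
Qed.
End Gen2.

Definition low n h := forall y, (n <= l y)%N -> tcoef h y = 0.
Lemma low0 n : low n 0. Proof. by move=> y _; rewrite tcoef0. Qed.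
Lemma lowD n h1 h2 : low n h1 -> low n h2 -> low n (h1 + h2).
Proof. by move=> a b y hy; rewrite tcoefD a // b // addr0. Qed.
Lemma lowZ n a h : low n h -> low n (a *: h).
Proof. by move=> b y hy; rewrite tcoefZ b // mulr0. Qed.
Lemma lowN n h : low n h -> low n (- h).
Proof. by move=> b y hy; rewrite tcoefN b // oppr0. Qed.
Lemma lowB n h1 h2 : low n h1 -> low n h2 -> low n (h1 - h2).
Proof. by move=> a b; apply: lowD => //; apply: lowN. Qed.
Lemma low_sum n (I : Type) (r : seq I) (F : I -> H) :
  (forall i, low n (F i)) -> low n (\sum_(i <- r) F i).
Proof.
move=> hF; elim: r => [|i r IH]; first by rewrite big_nil; apply: low0.
by rewrite big_cons; apply: lowD.
Qed.
Lemma low_mono n m h : (n <= m)%N -> low n h -> low m h.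
Proof. by move=> nm b y hy; apply: b; apply: leq_trans hy. Qed.
Lemma lowT n x : (l x < n)%N -> low n (T x).
Proof.
move=> hx y hy; rewrite tcoefT; case: eqP => // e.
by move: hy; rewrite -e leqNgt hx.
Qed.

Lemma low_Ts n s h : S s -> low n h -> low n.+1 (T s * h).
Proof.
move=> Ss hn; have [ys [_ _ e]] := supp h; rewrite e mulr_sumr.
apply: low_sum => y; rewrite -scalerAr.
have [t0|tn] := eqVneq (tcoef h y) 0; first by rewrite t0 scale0r; apply: low0.
have hy : (l y < n)%N by rewrite ltnNge; apply/negP => /hn; apply/eqP.
apply: lowZ; case: (lsx hcox hlen y Ss) => hl.
  by rewrite TT_up; [apply: lowT; rewrite hl|done|rewrite hl].
rewrite TT_down; [|done|by rewrite hl].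
apply: lowD; last by apply: lowZ; apply: lowT; apply: leq_trans hy _.
by apply: lowT; apply: (leq_trans _ (leq_trans hy (leqnSn n))); rewrite hl.
Qed.

Lemma low_Tinvs n s h : S s -> low n h -> low n.+1 (Tinv s * h).
Proof.
move=> Ss hn; rewrite Tinv_s // mulrBl -scalerAl mul1r.
by apply: lowB; [apply: low_Ts|apply: lowZ; apply: low_mono hn].
Qed.

Lemma tri u : reduced S l u -> low (l (wprod u)) (\prod_(x <- u) Tinv x - T (wprod u)).
Proof.
elim: u => [|s u IH] r.
  by rewrite big_nil wprod_nil T1 subrr; apply: low0.
have [ru hl] := reduced_tail hlen r; have [/= /andP [Ss _] su] := r.
have [_ su'] := ru.
have lx : l (wprod (s :: u)) = (l (wprod u)).+1 by rewrite -su -su'.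
rewrite big_cons.
have -> : Tinv s * \prod_(x <- u) Tinv x - T (wprod (s :: u)) =
   Tinv s * (\prod_(x <- u) Tinv x - T (wprod u)) - kk s *: T (wprod u).
  rewrite mulrBr Tinv_s // [X in _ - X - _]mulrBl -scalerAl mul1r TT_up // -wprod_cons.
  by rewrite opprB !addrA addrAC addrK.
rewrite lx; apply: lowB; first by apply: low_Tinvs => //; apply: IH.
by apply: lowZ; apply: lowT.
Qed.

Lemma tri_Tinv x y : (l x <= l y)%N -> tcoef (Tinv x^-1%g) y = tcoef (T x) y.
Proof.
have [u [ru <-]] := reduced_word hlen x => hy.
rewrite Tinv_prod //; apply/eqP; rewrite -subr_eq0 -tcoefB; apply/eqP.
exact: (tri ru).
Qed.

Lemma bar0 : bar 0 = 0. Proof. exact: (addf0 bar_add). Qed.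

Lemma Mlem h z : barH h = h -> (forall y, tcoef h y != 0 -> (l y <= l z)%N) ->
  tcoef h z = bar (tcoef h z).
Proof.
move=> hb hz; have [ys [u yn e]] := supp h.
rewrite -{1}hb; set t := tcoef h z.
have -> : barH h = barH (\sum_(y <- ys) tcoef h y *: T y) by rewrite -e.
rewrite (addf_sum barH_add) tcoef_sum.
transitivity (tcoef (\sum_(y <- ys) bar (tcoef h y) *: T y) z).
  rewrite tcoef_sum; apply: eq_bigr => y _; rewrite barH_aT !tcoefZ.
  have [t0|tn] := eqVneq (tcoef h y) 0; first by rewrite t0 bar0 !mul0r.
  by rewrite tri_Tinv //; apply: hz.
rewrite coef_sumT //; case: ifP => [_ //|zn]; by rewrite /t (yn _ (negbT zn)) bar0.
Qed.

Hypothesis htot : tot_ord_group G.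

Lemma pos_neg (g : G) : 0 < g -> 0 < - g -> False.
Proof.
move=> h1 h2; case: htot => _ tr; have h2' : 0 <= - g by apply: ltW.
have := tr 0 (- g) g h2'.
rewrite add0r addNr => h; have := lt_le_trans h1 h; by rewrite ltxx.
Qed.

Lemma bar_fix_pos a : zspan v (fun g => 0 < g) a -> bar a = a -> a = 0.
Proof.
move=> ha e; apply: (zspan_disj hv (P := fun g => 0 < g) (Q := fun g => 0 < - g)) => //.
  exact: pos_neg.
by rewrite -e; apply: (bar_zspan (P := fun g => 0 < g)).
Qed.

Lemma maxl (f : W -> nat) (s : seq W) : s != [::] ->
  exists2 z, z \in s & forall y, y \in s -> (f y <= f z)%N.
Proof.
elim: s => [//|x s IH] _; case: (eqVneq s [::]) => [->|sn].
  by exists x; rewrite ?inE // => y; rewrite inE => /eqP ->.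
have [z zs zm] := IH sn; case: (leqP (f z) (f x)) => hx.
  exists x; first by rewrite inE eqxx.
  by move=> y; rewrite inE => /orP [/eqP -> //|/zm hy]; apply: leq_trans hy hx.
exists z; first by rewrite inE zs orbT.
by move=> y; rewrite inE => /orP [/eqP ->|/zm //]; apply: ltnW.
Qed.


Lemma supp_max h : (forall y, tcoef h y = 0) \/
   exists z, tcoef h z != 0 /\ forall y, tcoef h y != 0 -> (l y <= l z)%N.
Proof.
have [ys [u yn e]] := supp h.
case: (eqVneq [seq y <- ys | tcoef h y != 0] [::]) => Z0.
  left => y; case: (boolP (y \in ys)) => yy; last by apply: yn.
  apply/eqP; apply: contraT => ny.
  by have : y \in [seq y <- ys | tcoef h y != 0]; [rewrite mem_filter ny yy|rewrite Z0].
right; have [z zZ zm] := maxl l Z0; exists z; move: zZ; rewrite mem_filter => /andP [nz _].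
split=> // y ny; apply: zm; rewrite mem_filter ny /=.
by apply: contraT => /yn e0; rewrite e0 eqxx in ny.
Qed.

Lemma uniq0 h : barH h = h -> (forall y, zspan v (fun g => 0 < g) (tcoef h y)) -> h = 0.
Proof.
move=> hb hp; case: (supp_max h) => [a|[z [nz zm]]].
  by apply: hext => y; rewrite a tcoef0.
have := Mlem hb zm => e; move: nz; rewrite (bar_fix_pos (hp z)) ?eqxx //.
Qed.

Variable C : W -> H.
Hypothesis hkl : kl_basis v T barH C.

Lemma C_bar w : barH (C w) = C w. Proof. by case: (hkl w). Qed.

Lemma C_coef w y : exists q, zspan v (fun g => 0 < g) q /\ tcoef (C w) y = tcoef (T w) y + q.
Proof.
have [_ [r [Hr e]]] := hkl w.
exists (\sum_(p <- r) p.2 * tcoef (T p.1) y); split.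
  apply: zspan_sum_in => p pr; rewrite tcoefT; case: eqP => _; last by rewrite mulr0; apply: zspan0.
  by rewrite mulr1; apply: Hr.
by rewrite e tcoefD tcoef_sum; congr (_ + _); apply: eq_bigr => p _; rewrite tcoefZ.
Qed.

Lemma bar1 : bar 1 = 1.
Proof. by case: hv => v0 _ _ _; rewrite -v0 bar_v oppr0. Qed.

Lemma C_low w z : (l w <= l z)%N -> tcoef (C w) z = tcoef (T w) z.
Proof.
move=> hz.
have step1 : forall y, tcoef (C w) y != 0 -> (l y <= l w)%N.
  case: (supp_max (C w)) => [a y|[z' [nz zm]] y ny]; first by rewrite a eqxx.
  case: (eqVneq w z') => [e|ne]; first by rewrite e; apply: zm.
  have := Mlem (C_bar w) zm; have [q [qp eq]] := C_coef w z'.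
  rewrite eq tcoefT (negbTE ne) add0r => /esym /(bar_fix_pos qp) q0.
  by move: nz; rewrite eq q0 tcoefT (negbTE ne) addr0 eqxx.
have zm : forall y, tcoef (C w) y != 0 -> (l y <= l z)%N.
  by move=> y /step1 h; apply: leq_trans h hz.
have := Mlem (C_bar w) zm; have [q [qp ->]] := C_coef w z.
rewrite tcoefT; case: eqP => [e|ne].
  by rewrite bar_add bar1 => /addrI /esym /(bar_fix_pos qp) ->; rewrite addr0.
by rewrite add0r => /esym /(bar_fix_pos qp).
Qed.

Lemma C_indep (ys : seq W) (b : W -> A) : uniq ys -> \sum_(y <- ys) b y *: C y = 0 ->
  forall y, y \in ys -> b y = 0.
Proof.
move=> u e; case: (eqVneq [seq y <- ys | b y != 0] [::]) => Z0.
  move=> y yy; apply/eqP; apply: contraT => ny.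
  by have : y \in [seq y <- ys | b y != 0]; [rewrite mem_filter ny yy|rewrite Z0].
have [z zZ zm] := maxl l Z0; move: zZ; rewrite mem_filter => /andP [nz zy].
have : tcoef (\sum_(y <- ys) b y *: C y) z = b z.
  rewrite tcoef_sum.
  transitivity (tcoef (\sum_(y <- ys) b y *: T y) z); last by rewrite coef_sumT // zy.
  rewrite tcoef_sum; apply: eq_big_seq => y yy; rewrite !tcoefZ.
  have [b0|bn] := eqVneq (b y) 0; first by rewrite b0 !mul0r.
  by rewrite C_low //; apply: zm; rewrite mem_filter bn yy.
by rewrite e tcoef0 => /esym b0; rewrite b0 eqxx in nz.
Qed.

Lemma HK_C w : HC (@K G) (L w) (C w).
Proof.
have ex : forall y, exists qB, zspan v (fun g => 0 < g /\ ~ K (L w + L y) g) qB /\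
    zspan v (K (L w + L y)) (tcoef (C w) y - qB).
  move=> y; have [q [qp e]] := C_coef w y.
  have [q1 [q2 [eq h1 h2]]] := zspan_split (K (L w + L y)) qp.
  exists q2; split => //; rewrite e eq addrA addrK; apply: zspanD.
    rewrite tcoefT; case: eqP => [<-|_]; last by apply: zspan0.
    case: hv => v0 _ _ _; rewrite -v0; apply: zspan_v1.
    by rewrite /K sub0r; apply: twiceN; apply: twiceDD.
  by apply: zspan_mono h1 => g [].
pose qB y := proj1_sig (constructive_indefinite_description _ (ex y)).
have qBp : forall y, _ := fun y => proj2_sig (constructive_indefinite_description _ (ex y)).
have [ys [u yn e]] := supp (C w).
pose hB := \sum_(y <- ys) qB y *: T y.
pose hK := C w - hB.
have hBc : HC (fun c g => ~ K c g) (L w) hB.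
  move=> y; rewrite coef_sumT //; case: ifP => _; last by apply: zspan0.
  by case: (qBp y) => h _; apply: zspan_mono h => g [].
have hKc : HC (@K G) (L w) hK.
  move=> y; rewrite tcoefB coef_sumT //; case: ifP => yy; first by case: (qBp y).
  by rewrite yn ?subr0 ?yy //; apply: zspan0.
have [a1 b1 c1] := K_Qs; have [a2 b2 c2] := NK_Qs.
have hBb := HC_bar a2 b2 c2 hBc; have hKb := HC_bar a1 b1 c1 hKc.
have eC : C w = hK + hB by rewrite subrK.
have D : barH hB - hB = hK - barH hK.
  have := C_bar w; rewrite {1}eC barH_add {1}eC => e2.
  apply: (addIr (barH hK + hB)); rewrite addrACA addNr addr0 [RHS]addrA subrK addrC e2 //.
have D0 : barH hB - hB = 0.
  apply: hext => y; rewrite tcoef0.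
  apply: (zspan_disj hv (P := K (L w + L y)) (Q := fun g => ~ K (L w + L y) g)).
  - by move=> g.
  - by rewrite D; apply: (HCB hKc hKb).
  - exact: (HCB hBb hBc).
have hB0 : hB = 0.
  apply: uniq0; first by apply/eqP; rewrite -subr_eq0 D0.
  move=> y; rewrite coef_sumT //; case: ifP => _; last by apply: zspan0.
  by case: (qBp y) => h _; apply: zspan_mono h => g [].
by rewrite eC hB0 addr0.
Qed.

Lemma Pstar_K (Pstar : W -> W -> A) w y : pstar_spec l bar tcoef C Pstar ->
  zspan v (K (L w + L y)) (Pstar y w).
Proof.
move=> hP; have e := hP y w.
have -> : Pstar y w = (-1) ^+ (l y + l w) * bar (tcoef (C w) y).
  by rewrite e (bar_sign hbar) (barK hv hbar) signK.
apply: zspan_sign; apply: zspan_mono (bar_zspan (HK_C w y)) => g /K_N; by rewrite opprK.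
Qed.

Lemma mu_K (mu : W -> W -> W -> A) s y w : mu_spec S l C mu ->
  zspan v (K (L w + L y + L s)) (mu s y w).
Proof.
move=> [mu1 mu2].
case: (classic (S s /\ (l w < l (s * w)%g)%N /\ bruhat_lt S l y w)) => [[Ss [hl hyw]]|nc];
  last by rewrite mu2 //; apply: zspan0.
have [ys [u hys e]] := mu1 s w Ss hl.
have yy : y \in ys by apply/hys.
pose m z := (-1) ^+ (l z + l w + 1) * mu s z w.
have ex : forall z, exists mB, zspan v (fun g => ~ K (L w + L z + L s) g) mB /\
    zspan v (K (L w + L z + L s)) (m z - mB).
  move=> z; case: hv => _ _ hs _; have [r er] := hs (m z).
  have mz : zspan v (fun _ => True) (m z) by exists r.
  have [q1 [q2 [eq h1 h2]]] := zspan_split (K (L w + L z + L s)) mz.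
  exists q2; split; first by apply: zspan_mono h2 => g [].
  by rewrite eq addrK; apply: zspan_mono h1 => g [].
pose mB z := proj1_sig (constructive_indefinite_description _ (ex z)).
have mBp : forall z, _ := fun z => proj2_sig (constructive_indefinite_description _ (ex z)).
have [a1 b1 c1] := K_Qs; have [a2 b2 c2] := NK_Qs.
pose R := C s * C w - C (s * w)%g.
have hR : HC (@K G) (L s + L w) R.
  apply: HCB; first by apply: (HC_mulK a1 b1) => //; apply: HK_C.
  by rewrite -L_up //; apply: HK_C.
have eR : R = \sum_(z <- ys) m z *: C z by rewrite /R e addrAC subrr add0r.
pose XK := \sum_(z <- ys) (m z - mB z) *: C z.
pose XB := \sum_(z <- ys) mB z *: C z.
have hXK : HC (@K G) (L s + L w) XK.
  apply: HC_sum => z; apply: (HC_sh b1 (c := L z + (L w + L z + L s))).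
    by apply: twice_eq (twiceN (twiceDD (L z))); rewrite E1.
  by apply: (HC_scaleK a1); [case: (mBp z)|apply: HK_C].
have hXB : HC (fun c g => ~ K c g) (L s + L w) XB.
  apply: HC_sum => z; apply: (HC_sh b2 (c := L z + (L w + L z + L s))).
    by apply: twice_eq (twiceN (twiceDD (L z))); rewrite E1.
  by apply: (HC_scaleQ a2); [case: (mBp z)|apply: HK_C].
have eXB : XB = R - XK.
  by rewrite eR /XK -sumrB; apply: eq_bigr => z _; rewrite -scalerBl opprB addrC subrK.
have XB0 : XB = 0.
  apply: hext => z; rewrite tcoef0.
  apply: (zspan_disj hv (P := K (L s + L w + L z)) (Q := fun g => ~ K (L s + L w + L z) g)).
  - by move=> g.
  - by rewrite eXB; apply: (HCB hR hXK).
  - exact: hXB.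
have mB0 := C_indep u XB0 yy.
have -> : mu s y w = (-1) ^+ (l y + l w + 1) * m y by rewrite signK.
apply: zspan_sign; case: (mBp y) => _; rewrite -/(mB y) mB0 subr0.
by [].
Qed.
End Hecke.

Unset Implicit Arguments.
Set Strict Implicit.

Theorem mainTheorem1
  (W : groupType) (S : pred W) (l : W -> nat)
  (G : porderZmodType) (L : W -> G)
  (A : comNzRingType) (v : G -> A) (bar : A -> A)
  (eps : G -> int) (theta : A -> A)
  (H : algType A) (T Tinv : W -> H) (tcoef : H -> W -> A) (barH : H -> H)
  (C : W -> H) (Pstar : W -> W -> A) (mu : W -> W -> W -> A) :
  coxeter_system S ->
  length_fun S l ->
  tot_ord_group G ->
  weight_fun S l L ->
  (forall s, S s -> 0 <= L s) ->
  group_ring v ->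
  bar_spec v bar ->
  hecke_algebra S l L v T tcoef ->
  tinv_spec T Tinv ->
  barH_spec bar T Tinv barH ->
  kl_basis v T barH C ->
  pstar_spec l bar tcoef C Pstar ->
  mu_spec S l C mu ->
  sign_hom eps ->
  theta_spec v eps theta ->
  [/\ (forall y w, theta (Pstar y w) = Pstar y w *~ eps (L w + L y)),
      (forall s y w, S s ->
         theta (mu s y w) = mu s y w *~ eps (L w + L y + L s)),
      (forall y w, zspan v (@twice G) (v (L w - L y) * Pstar y w)) &
      (forall s y w, S s ->
         zspan v (@twice G) (v (L w - L y) * v (L s) * mu s y w))].
Proof.
move=> hcox hlen htot hw _ hv hbar hH htinv hbarH hkl hP hmu se ht.
have PK := fun y w => Pstar_K hcox hlen hw hv hbar hH htinv hbarH htot hkl w y hP.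
have MK := fun s y w => mu_K hcox hlen hw hv hbar hH htinv hbarH htot hkl s y w hmu.
split.
- by move=> y w; apply: (theta_K se ht (PK y w)).
- by move=> s y w _; apply: (theta_K se ht (MK s y w)).
- move=> y w; have hv1 : zspan v (fun g => g = L w - L y) (v (L w - L y)) by apply: zspan_v1.
  apply: (zspanM hv _ hv1 (PK y w)).
  move=> g h -> hk; rewrite E2; apply: twiceD hk (twiceDD _).
- move=> s y w _; case: (hv) => _ vD _ _; rewrite -vD.
  have hv1 : zspan v (fun g => g = L w - L y + L s) (v (L w - L y + L s)) by apply: zspan_v1.
  apply: (zspanM hv _ hv1 (MK s y w)).
  move=> g h -> hk; rewrite E3; apply: twiceD hk (twiceDD _).
Qed.
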